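(* Let $\varphi(t,a,v)$ solve the non-autonomous first passage time problem (NFPT) defined in the context, let $P(t,a)=\int_{-\infty}^1\varphi(t,a,v)\,dv>0$, $ISI(t,a)=-\frac{\sigma^2}{2}\partial_v\varphi(t,a,1)$, and define the hazard rate $S(t,a)=ISI(t,a)/P(t,a)$. Let $n(t,a)$ solve the age-structured system $$\partial_t n(t,a)+\partial_a n(t,a)+S(t,a)n(t,a)=0,\qquad n(t,0)=\int_0^\infty S(t,a)n(t,a)\,da.$$ Then $$\pi(t,a,v)=\frac{\varphi(t,a,v)}{P(t,a)}\,n(t,a)$$ satisfies the equation $\partial_t\pi+\partial_a\pi+\partial_v[(\mu(t)-v)\pi]-\frac{\sigma^2}{2}\partial_v^2\pi=0$, the absorbing condition $\pi(t,a,1)=0$, the no-flux condition $\lim_{v\to-\infty}[(v-\mu(t))\pi+\frac{\sigma^2}{2}\partial_v\pi]=0$, and the reset condition $\pi(t,0,v)=\delta(v-v_r)\,r(t)$ with $r(t)=\int_0^\infty S(t,a)n(t,a)\,da=\int_0^\infty\rho(t,a)\,da$, where $\rho(t,a)=-\frac{\sigma^2}{2}\partial_v\pi(t,a,1)$; i.e. $\pi$ solves the age-and-potential system with time-dependent stimulus $\mu(t)$.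
   Context: Fix $\sigma>0$, a reset potential $v_r<1$ and a time-dependent stimulus $\mu:[0,\infty)\to\mathbb R$. The non-autonomous first passage time problem (NFPT): find $\varphi(t,a,v)$, $t>0$, $a>0$, $v<1$, such that $$\partial_t\varphi+\partial_a\varphi+\partial_v\big[(\mu(t)-v)\varphi\big]-\frac{\sigma^2}{2}\partial_v^2\varphi=0,$$ $\varphi(t,0,v)=\delta(v-v_r)$, $\varphi(t,a,1)=0$, $\lim_{v\to-\infty}\big[(v-\mu(t))\varphi+\frac{\sigma^2}{2}\partial_v\varphi\big]=0$, and $\varphi(0,a,v)=\varphi_0(a,v)$, where $\varphi_0$ is the solution of the autonomous first passage time problem with constant stimulus $\mu(0)$: $\partial_a\varphi_0+\partial_v[(\mu(0)-v)\varphi_0]-\frac{\sigma^2}{2}\partial_v^2\varphi_0=0$, $\varphi_0(0,v)=\delta(v-v_r)$, $\varphi_0(a,1)=0$, no-flux condition at $v\to-\infty$. *)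

(* Defs.v *)
From Stdlib Require Import Reals Lra.
Open Scope R_scope.

Definition RInt_is (f : R -> R) (a b I : R) : Prop :=
  exists pr : Riemann_integrable f a b, RiemannInt pr = I.

Definition RInt_minf_is (f : R -> R) (b I : R) : Prop :=
  forall eps, 0 < eps -> exists M, M < b /\ forall L, L < M ->
    exists J, RInt_is f L b J /\ Rabs (J - I) < eps.

Definition RInt_0pinf_is (f : R -> R) (I : R) : Prop :=
  forall eps, 0 < eps -> exists d M, 0 < d /\ d < M /\
    forall lo hi, 0 < lo < d -> M < hi ->
    exists J, RInt_is f lo hi J /\ Rabs (J - I) < eps.

Definition lim_left (f : R -> R) (x l : R) : Prop :=
  forall eps, 0 < eps -> exists d, 0 < d /\
    forall y, x - d < y < x -> Rabs (f y - l) < eps.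

Definition lim_right (f : R -> R) (x l : R) : Prop :=
  forall eps, 0 < eps -> exists d, 0 < d /\
    forall y, x < y < x + d -> Rabs (f y - l) < eps.

Definition lim_minf (f : R -> R) (l : R) : Prop :=
  forall eps, 0 < eps -> exists M, forall y, y < M -> Rabs (f y - l) < eps.

(* f is a classical solution, with partial derivatives ft = d_t f,
   fa = d_a f, fv = d_v f, fvv = d_v^2 f and fJv = d_v[(mu(t)-v) f],
   on the domain t>0, a>0, v<1, of
     d_t f + d_a f + d_v[(mu(t)-v) f] - sigma^2/2 d_v^2 f = 0,
   with absorbing condition f(t,a,1)=0 and the no-flux condition at
   v -> -oo.  f and d_v f extend continuously to v = 1 (so d_v f(t,a,1),
   used in the firing flux, is the one-sided derivative at v = 1). *)
Definition FP_classical (sigma : R) (mu : R -> R)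
  (f ft fa fv fvv fJv : R -> R -> R -> R) : Prop :=
  (forall t a v, 0 < t -> 0 < a -> v < 1 ->
     derivable_pt_lim (fun s => f s a v) t (ft t a v) /\
     derivable_pt_lim (fun b => f t b v) a (fa t a v) /\
     derivable_pt_lim (fun w => f t a w) v (fv t a v) /\
     derivable_pt_lim (fun w => fv t a w) v (fvv t a v) /\
     derivable_pt_lim (fun w => (mu t - w) * f t a w) v (fJv t a v)) /\
  (forall t a, 0 < t -> 0 < a ->
     lim_left (fun w => f t a w) 1 (f t a 1) /\
     lim_left (fun w => fv t a w) 1 (fv t a 1)) /\
  (forall t a v, 0 < t -> 0 < a -> v < 1 ->
     ft t a v + fa t a v + fJv t a v - sigma ^ 2 / 2 * fvv t a v = 0) /\
  (forall t a, 0 < t -> 0 < a -> f t a 1 = 0) /\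
  (forall t a, 0 < t -> 0 < a ->
     lim_minf (fun v => (v - mu t) * f t a v + sigma ^ 2 / 2 * fv t a v) 0).

Definition test_fn (g : R -> R) : Prop :=
  continuity g /\ exists B, forall v, Rabs (g v) <= B.

(* Reset condition  f(t,0,v) = delta(v - vr) c(t), understood as the weak
   limit a -> 0+ of f(t,a,.) against bounded continuous test functions. *)
Definition reset_delta (f : R -> R -> R -> R) (vr : R) (c : R -> R) : Prop :=
  forall t, 0 < t -> forall g, test_fn g ->
  forall eps, 0 < eps -> exists d, 0 < d /\ forall a, 0 < a < d ->
    exists I, RInt_minf_is (fun v => f t a v * g v) 1 I /\
              Rabs (I - g vr * c t) < eps.

(* Autonomous first passage time problem with constant stimulus m:
   phi0(a,v) solves d_a phi0 + d_v[(m-v)phi0] - sigma^2/2 d_v^2 phi0 = 0,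
   phi0(0,v)=delta(v-vr), phi0(a,1)=0, no flux at -oo. *)
Definition FPT_auto (sigma vr m : R) (phi0 : R -> R -> R) : Prop :=
  exists phi0a phi0v phi0vv phi0Jv : R -> R -> R,
    FP_classical sigma (fun _ => m) (fun _ a v => phi0 a v)
      (fun _ _ _ => 0) (fun _ a v => phi0a a v) (fun _ a v => phi0v a v)
      (fun _ a v => phi0vv a v) (fun _ a v => phi0Jv a v) /\
    reset_delta (fun _ a v => phi0 a v) vr (fun _ => 1).

Definition NFPT (sigma vr : R) (mu : R -> R)
  (phi phit phia phiv phivv phiJv : R -> R -> R -> R) : Prop :=
  FP_classical sigma mu phi phit phia phiv phivv phiJv /\
  reset_delta phi vr (fun _ => 1) /\
  exists phi0, FPT_auto sigma vr (mu 0) phi0 /\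
    forall a v, 0 < a -> v < 1 -> phi 0 a v = phi0 a v.

Definition cont_Dbar (F : R -> R -> R -> R) : Prop :=
  forall t a v, 0 < t -> 0 < a -> v <= 1 ->
  forall eps, 0 < eps -> exists d, 0 < d /\
    forall t' a' v', 0 < t' -> 0 < a' -> v' <= 1 ->
      Rabs (t' - t) < d -> Rabs (a' - a) < d -> Rabs (v' - v) < d ->
      Rabs (F t' a' v' - F t a v) < eps.

(* Standing regularity of a classical solution needed to differentiate
   P(t,a) = \int phi dv under the integral sign: d_t phi and d_a phi are
   jointly continuous up to v = 1 and locally dominated by an integrable
   function of v. *)
Definition NFPT_regular (phit phia : R -> R -> R -> R) : Prop :=
  cont_Dbar phit /\ cont_Dbar phia /\
  forall t a, 0 < t -> 0 < a -> exists (d : R) (g : R -> R), 0 < d /\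
    (exists Ig, RInt_minf_is g 1 Ig) /\
    forall t' a' v, 0 < t' -> 0 < a' -> Rabs (t' - t) < d ->
      Rabs (a' - a) < d -> v <= 1 ->
      Rabs (phit t' a' v) <= g v /\ Rabs (phia t' a' v) <= g v.

Definition hazard (sigma : R) (phiv : R -> R -> R -> R) (P : R -> R -> R)
  (t a : R) : R :=
  (- (sigma ^ 2 / 2) * phiv t a 1) / P t a.

(* Main.v *)
Require Import Defs.
From Stdlib Require Import Reals Lra Lia ZArith.
From Coquelicot Require Import Coquelicot.
From Stdlib Require Import FunctionalExtensionality.
Open Scope R_scope.

Lemma RInt_sub (f g : R -> R) a b : ex_RInt f a b -> ex_RInt g a b ->
  RInt (fun x => f x - g x) a b = RInt f a b - RInt g a b.
Proof. intros. exact (RInt_minus f g a b H H0). Qed.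
Lemma ex_RInt_sub (f g : R -> R) a b : ex_RInt f a b -> ex_RInt g a b ->
  ex_RInt (fun x => f x - g x) a b.
Proof. intros. exact (ex_RInt_minus f g a b H H0). Qed.
Lemma RInt_add (f g : R -> R) a b : ex_RInt f a b -> ex_RInt g a b ->
  RInt (fun x => f x + g x) a b = RInt f a b + RInt g a b.
Proof. intros. exact (RInt_plus f g a b H H0). Qed.
Lemma ex_RInt_add (f g : R -> R) a b : ex_RInt f a b -> ex_RInt g a b ->
  ex_RInt (fun x => f x + g x) a b.
Proof. intros. exact (ex_RInt_plus f g a b H H0). Qed.
Lemma RInt_mulc (f : R -> R) a b k : ex_RInt f a b ->
  RInt (fun x => k * f x) a b = k * RInt f a b.
Proof. intros. exact (RInt_scal f a b k H). Qed.
Lemma ex_RInt_mulc (f : R -> R) a b k : ex_RInt f a b ->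
  ex_RInt (fun x => k * f x) a b.
Proof. intros. exact (ex_RInt_scal f a b k H). Qed.
Lemma RInt_split (f : R -> R) a b c : ex_RInt f a b -> ex_RInt f b c ->
  RInt f a c = RInt f a b + RInt f b c.
Proof. intros. symmetry. exact (RInt_Chasles f a b c H H0). Qed.
Definition ImpC (f : R -> R) (I : R) : Prop :=
  (forall c, c <= 1 -> ex_RInt f c 1) /\
  (forall eps, 0 < eps -> exists M, forall L, L < M -> Rabs (RInt f L 1 - I) < eps).

Lemma RInt_is_equiv (f : R -> R) a b I : RInt_is f a b I <-> (ex_RInt f a b /\ RInt f a b = I).
Proof. split.
- intros [pr H]. split. apply ex_RInt_Reals_1; exact pr. rewrite (RInt_Reals f a b pr). exact H.
- intros [H1 H2]. exists (ex_RInt_Reals_0 f a b H1). rewrite <- RInt_Reals. exact H2.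
Qed.

Lemma imp_iff (f : R -> R) I : RInt_minf_is f 1 I <-> ImpC f I.
Proof. split.
- intros H. split.
  + intros c Hc. destruct (H 1 Rlt_0_1) as [M [HM HL]].
    destruct (HL (Rmin M c - 1)) as [J [HJ _]].
    { assert (Rmin M c <= M) by apply Rmin_l. lra. }
    apply RInt_is_equiv in HJ. destruct HJ as [HJ _].
    apply (ex_RInt_Chasles_2 f (Rmin M c - 1)); auto.
    assert (Rmin M c <= c) by apply Rmin_r. lra.
  + intros eps He. destruct (H eps He) as [M [HM HL]]. exists M.
    intros L HL'. destruct (HL L HL') as [J [HJ HJ2]].
    apply RInt_is_equiv in HJ. destruct HJ as [_ HJ]. rewrite HJ. exact HJ2.
- intros [H1 H2] eps He. destruct (H2 eps He) as [M HM].
  exists (Rmin M 0). split. assert (Rmin M 0 <= 0) by apply Rmin_r. lra.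
  intros L HL. exists (RInt f L 1). split.
  + apply RInt_is_equiv. split; auto. apply H1.
    assert (Rmin M 0 <= 0) by apply Rmin_r. lra.
  + apply HM. assert (Rmin M 0 <= M) by apply Rmin_l. lra.
Qed.

Lemma small_zero x : (forall eps, 0 < eps -> Rabs x < eps) -> x = 0.
Proof. intros H. destruct (Req_dec x 0); auto.
  assert (0 < Rabs x) by (apply Rabs_pos_lt; auto).
  specialize (H _ H1). lra. Qed.

Lemma impC_unique (f : R -> R) I1 I2 : ImpC f I1 -> ImpC f I2 -> I1 = I2.
Proof. intros [_ H1] [_ H2].
  assert (I1 - I2 = 0); [|lra]. apply small_zero. intros eps He.
  destruct (H1 (eps/2)) as [M1 HM1]; [lra|].
  destruct (H2 (eps/2)) as [M2 HM2]; [lra|].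
  set (L := Rmin M1 M2 - 1).
  assert (L < M1) by (assert (Rmin M1 M2 <= M1) by apply Rmin_l; unfold L; lra).
  assert (L < M2) by (assert (Rmin M1 M2 <= M2) by apply Rmin_r; unfold L; lra).
  specialize (HM1 L H). specialize (HM2 L H0).
  replace (I1 - I2) with (-(RInt f L 1 - I1) + (RInt f L 1 - I2)) by ring.
  eapply Rle_lt_trans. apply Rabs_triang. rewrite Rabs_Ropp. lra.
Qed.

Lemma impC_lin (f1 f2 : R -> R) I1 I2 a b : ImpC f1 I1 -> ImpC f2 I2 ->
  ImpC (fun v => a * f1 v + b * f2 v) (a * I1 + b * I2).
Proof. intros [E1 H1] [E2 H2]. split.
- intros c Hc. apply ex_RInt_add; apply ex_RInt_mulc; auto.
- intros eps He.
  set (K := Rabs a + Rabs b + 1).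
  assert (HK : 0 < K) by (unfold K; pose proof (Rabs_pos a); pose proof (Rabs_pos b); lra).
  destruct (H1 (eps/K)) as [M1 HM1]. apply Rdiv_lt_0_compat; lra.
  destruct (H2 (eps/K)) as [M2 HM2]. apply Rdiv_lt_0_compat; lra.
  exists (Rmin (Rmin M1 M2) 1). intros L HL.
  assert (Rmin (Rmin M1 M2) 1 <= Rmin M1 M2) by apply Rmin_l.
  assert (Rmin (Rmin M1 M2) 1 <= 1) by apply Rmin_r.
  assert (Rmin M1 M2 <= M1) by apply Rmin_l.
  assert (Rmin M1 M2 <= M2) by apply Rmin_r.
  specialize (HM1 L ltac:(lra)). specialize (HM2 L ltac:(lra)).
  rewrite RInt_add by (apply ex_RInt_mulc; auto; apply E1 || apply E2; lra).
  rewrite !RInt_mulc by (apply E1 || apply E2; lra).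
  replace (a * RInt f1 L 1 + b * RInt f2 L 1 - (a * I1 + b * I2))
    with (a * (RInt f1 L 1 - I1) + b * (RInt f2 L 1 - I2)) by ring.
  eapply Rle_lt_trans. apply Rabs_triang. rewrite !Rabs_mult.
  assert (Rabs a * Rabs (RInt f1 L 1 - I1) <= Rabs a * (eps/K)).
  { apply Rmult_le_compat_l. apply Rabs_pos. lra. }
  assert (Rabs b * Rabs (RInt f2 L 1 - I2) <= Rabs b * (eps/K)).
  { apply Rmult_le_compat_l. apply Rabs_pos. lra. }
  assert ((Rabs a + Rabs b) * (eps / K) < eps).
  { replace (Rabs a + Rabs b) with (K - 1) by (unfold K; ring).
    assert (0 < eps / K) by (apply Rdiv_lt_0_compat; lra).
    replace ((K - 1) * (eps / K)) with (eps - eps / K) by (field; lra). lra. }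
  nra.
Qed.

Lemma impC_ext (f g : R -> R) I : (forall v, v < 1 -> f v = g v) -> ImpC f I -> ImpC g I.
Proof. intros Hfg [E H]. split.
- intros c Hc. apply (ex_RInt_ext f). intros x Hx. apply Hfg.
  assert (Rmax c 1 = 1) by (apply Rmax_right; lra). lra. auto.
- intros eps He. destruct (H eps He) as [M HM]. exists (Rmin M 1). intros L HL.
  assert (Rmin M 1 <= M) by apply Rmin_l. assert (Rmin M 1 <= 1) by apply Rmin_r.
  rewrite <- (RInt_ext f). apply HM; lra.
  intros x Hx. apply Hfg. assert (Rmax L 1 = 1) by (apply Rmax_right; lra). lra.
Qed.

Lemma nat_big r : exists N : nat, r < INR N.
Proof. destruct (archimed (Rabs r)) as [H _].
  assert (Hp : (0 < up (Rabs r))%Z).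
  { apply lt_IZR. pose proof (Rabs_pos r). lra. }
  exists (Z.to_nat (up (Rabs r))). rewrite INR_IZR_INZ, Z2Nat.id by lia.
  pose proof (Rle_abs r). lra.
Qed.

Lemma key_ineq (h g : R -> R) L' L : L' <= L <= 1 -> ex_RInt h L' 1 -> ex_RInt g L' 1 ->
  (forall v, v < 1 -> Rabs (h v) <= g v) ->
  Rabs (RInt h L' 1 - RInt h L 1) <= RInt g L' 1 - RInt g L 1.
Proof. intros HL Eh Eg Hb.
  assert (Eh1 : ex_RInt h L' L) by (apply (ex_RInt_Chasles_1 h L' L 1); auto).
  assert (Eh2 : ex_RInt h L 1) by (apply (ex_RInt_Chasles_2 h L' L 1); auto).
  assert (Eg1 : ex_RInt g L' L) by (apply (ex_RInt_Chasles_1 g L' L 1); auto).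
  assert (Eg2 : ex_RInt g L 1) by (apply (ex_RInt_Chasles_2 g L' L 1); auto).
  rewrite (RInt_split h L' L 1), (RInt_split g L' L 1) by auto.
  unfold Rminus; rewrite !Rplus_assoc, !Rplus_opp_r, !Rplus_0_r.
  eapply Rle_trans. apply abs_RInt_le; [lra|auto].
  apply RInt_le; [lra| |auto|].
  apply (ex_RInt_norm h); auto.
  intros x Hx. apply Hb. lra.
Qed.

Lemma tail_le (g : R -> R) Ig : ImpC g Ig -> (forall v, v < 1 -> 0 <= g v) ->
  forall L, L <= 1 -> RInt g L 1 <= Ig.
Proof. intros [E H] Hg L HL. apply Rle_plus_epsilon. intros eps He.
  destruct (H eps He) as [M HM].
  set (L' := Rmin M L - 1).
  assert (Rmin M L <= M) by apply Rmin_l. assert (Rmin M L <= L) by apply Rmin_r.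
  specialize (HM L' ltac:(unfold L'; lra)).
  assert (Eg : ex_RInt g L' 1) by (apply E; unfold L'; lra).
  rewrite (RInt_split g L' L 1) in HM.
  2: apply (ex_RInt_Chasles_1 g L' L 1); auto; unfold L'; lra.
  2: apply (ex_RInt_Chasles_2 g L' L 1); auto; unfold L'; lra.
  assert (0 <= RInt g L' L).
  { apply RInt_ge_0. unfold L'; lra. apply (ex_RInt_Chasles_1 g L' L 1); auto; unfold L'; lra.
    intros x Hx; apply Hg; lra. }
  apply Rabs_def2 in HM. lra.
Qed.

Lemma dom_bound (h g : R -> R) I Ig : ImpC g Ig -> ImpC h I ->
  (forall v, v < 1 -> Rabs (h v) <= g v) ->
  forall L, L <= 1 -> Rabs (RInt h L 1 - I) <= Ig - RInt g L 1.
Proof. intros Gi Hi Hb L HL.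
  assert (Hg : forall v, v < 1 -> 0 <= g v).
  { intros v Hv. specialize (Hb v Hv). pose proof (Rabs_pos (h v)). lra. }
  apply Rle_plus_epsilon. intros eps He.
  destruct Hi as [Eh Hh]. destruct (Hh eps He) as [M HM].
  set (L' := Rmin M L - 1).
  assert (Rmin M L <= M) by apply Rmin_l. assert (Rmin M L <= L) by apply Rmin_r.
  specialize (HM L' ltac:(unfold L'; lra)).
  pose proof (key_ineq h g L' L ltac:(unfold L'; lra) (Eh L' ltac:(unfold L'; lra))
     (proj1 Gi L' ltac:(unfold L'; lra)) Hb) as K.
  pose proof (tail_le g Ig Gi Hg L' ltac:(unfold L'; lra)).
  replace (RInt h L 1 - I) with (-(RInt h L' 1 - RInt h L 1) + (RInt h L' 1 - I)) by ring.
  eapply Rle_trans. apply Rabs_triang. rewrite Rabs_Ropp. lra.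
Qed.

Lemma dom_exists (h g : R -> R) Ig : ImpC g Ig -> (forall c, c <= 1 -> ex_RInt h c 1) ->
  (forall v, v < 1 -> Rabs (h v) <= g v) -> exists I, ImpC h I.
Proof. intros Gi Eh Hb.
  assert (Hg : forall v, v < 1 -> 0 <= g v).
  { intros v Hv. specialize (Hb v Hv). pose proof (Rabs_pos (h v)). lra. }
  set (u := fun n : nat => (RInt h (- INR n) 1 : R)).
  assert (Hle : forall n, - INR n <= 1) by (intro n; pose proof (pos_INR n); lra).
  assert (Est : forall eps, 0 < eps -> exists M, M <= 1 /\ forall L' L, L' <= L -> L < M ->
            Rabs (RInt h L' 1 - RInt h L 1) < eps).
  { intros eps He. destruct (proj2 Gi eps He) as [M HM]. exists (Rmin M 1).
    split. apply Rmin_r. intros L' L H1 H2.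
    assert (Rmin M 1 <= M) by apply Rmin_l. assert (Rmin M 1 <= 1) by apply Rmin_r.
    pose proof (key_ineq h g L' L ltac:(lra) (Eh L' ltac:(lra)) (proj1 Gi L' ltac:(lra)) Hb).
    pose proof (tail_le g Ig Gi Hg L' ltac:(lra)).
    specialize (HM L ltac:(lra)). apply Rabs_def2 in HM. lra. }
  assert (Cu : Cauchy_crit u).
  { intros eps He. destruct (Est (eps/2) ltac:(lra)) as [M [HM1 HM]].
    destruct (nat_big (- M)) as [N HN]. exists N. intros n m Hn Hm.
    unfold Rdist, u.
    apply le_INR in Hn. apply le_INR in Hm.
    pose proof (HM (- INR n) (- INR N) ltac:(lra) ltac:(lra)).
    pose proof (HM (- INR m) (- INR N) ltac:(lra) ltac:(lra)).
    replace (RInt h (- INR n) 1 - RInt h (- INR m) 1) with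
      ((RInt h (- INR n) 1 - RInt h (- INR N) 1) - (RInt h (- INR m) 1 - RInt h (- INR N) 1)) by ring.
    eapply Rle_lt_trans. apply Rabs_triang. rewrite Rabs_Ropp. lra. }
  destruct (Rcomplete.R_complete u Cu) as [l Hl]. exists l. split; auto.
  intros eps He. destruct (Est (eps/2) ltac:(lra)) as [M [HM1 HM]]. exists M.
  intros L HL. destruct (Hl (eps/2) ltac:(lra)) as [N1 HN1].
  destruct (nat_big (- L)) as [N2 HN2].
  set (n := max N1 N2).
  assert (n >= N1)%nat by (unfold n; lia). assert (n >= N2)%nat by (unfold n; lia).
  specialize (HN1 n H). unfold Rdist, u in HN1.
  assert (INR N2 <= INR n) by (apply le_INR; lia).
  pose proof (HM (- INR n) L ltac:(lra) HL).
  replace (RInt h L 1 - l) with (-(RInt h (- INR n) 1 - RInt h L 1) + (RInt h (- INR n) 1 - l)) by ring.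
  eapply Rle_lt_trans. apply Rabs_triang. rewrite Rabs_Ropp. lra.
Qed.

Lemma Rmin_lip x z : Rabs (Rmin x 1 - Rmin z 1) <= Rabs (x - z).
Proof. unfold Rmin. destruct (Rle_dec x 1), (Rle_dec z 1);
  unfold Rabs; repeat destruct Rcase_abs; lra. Qed.

Lemma cont_clip (k : R -> R) :
  (forall v, v <= 1 -> forall eps, 0 < eps -> exists del, 0 < del /\
     forall w, w <= 1 -> Rabs (w - v) < del -> Rabs (k w - k v) < eps) ->
  forall z, continuous (fun w => k (Rmin w 1)) z.
Proof. intros Hk z. apply continuity_pt_filterlim.
  intros eps He. destruct (Hk (Rmin z 1) (Rmin_r z 1) eps He) as [del [Hdel H]].
  exists del. split; auto. intros x [_ Hx]. simpl in Hx. unfold Rdist in *. simpl.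
  unfold Rdist. apply H. apply Rmin_r. eapply Rle_lt_trans. apply Rmin_lip. exact Hx.
Qed.

Lemma abs_le_split x a : Rabs x <= a -> -a <= x <= a.
Proof. unfold Rabs; destruct Rcase_abs; lra. Qed.

Lemma between_abs x0 x1 c : Rmin x0 x1 <= c <= Rmax x0 x1 -> Rabs (c - x0) <= Rabs (x1 - x0).
Proof. unfold Rmin, Rmax. destruct (Rle_dec x0 x1); intros;
  unfold Rabs; repeat destruct Rcase_abs; lra. Qed.

Lemma diff_param (f f' : R -> R -> R) (F g : R -> R) (Ig x0 d : R) :
  0 < d -> ImpC g Ig ->
  (forall x, Rabs (x - x0) < d -> ImpC (f x) (F x)) ->
  (forall x v, Rabs (x - x0) < d -> v < 1 -> derivable_pt_lim (fun s => f s v) x (f' x v)) ->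
  (forall x v, Rabs (x - x0) < d -> v < 1 -> Rabs (f' x v) <= g v) ->
  (forall v, v <= 1 -> forall eps, 0 < eps -> exists del, 0 < del /\
      forall x w, Rabs (x - x0) < del -> Rabs (w - v) < del -> w <= 1 ->
      Rabs (f' x w - f' x0 v) < eps) ->
  exists D, ImpC (f' x0) D /\ derivable_pt_lim F x0 D.
Proof.
  intros Hd Gi HF Hder Hb Hc.
  assert (H00 : Rabs (x0 - x0) < d) by (rewrite Rminus_eq_0, Rabs_R0; lra).
  assert (Bf' : forall v, v < 1 -> Rabs (f' x0 v) <= g v) by (intros; apply Hb; auto).
  assert (Ek : forall z, continuous (fun w => f' x0 (Rmin w 1)) z).
  { apply cont_clip. intros v Hv eps He. destruct (Hc v Hv eps He) as [del [Hdel H]].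
    exists del. split; auto. intros w Hw1 Hw2. apply H; auto. rewrite Rminus_eq_0, Rabs_R0; auto. }
  assert (Ef' : forall c c', c <= c' <= 1 -> ex_RInt (f' x0) c c').
  { intros c c' Hcc. apply (ex_RInt_ext (fun w => f' x0 (Rmin w 1))).
    intros x Hx. rewrite Rmin_left; auto. rewrite Rmax_right in Hx; lra.
    apply (@ex_RInt_continuous R_CompleteNormedModule). intros; apply Ek. }
  destruct (dom_exists (f' x0) g Ig Gi (fun c Hc => Ef' c 1 (conj Hc (Rle_refl 1))) Bf') as [D HD].
  exists D. split; auto.
  intros eps He.
  destruct (proj2 Gi (eps/8)) as [M HM]; [lra|].
  set (L := Rmin M 0 - 1).
  assert (HL0 : L < 0) by (assert (Rmin M 0 <= 0) by apply Rmin_r; unfold L; lra).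
  assert (HtL : Ig - RInt g L 1 < eps/8).
  { assert (Rmin M 0 <= M) by apply Rmin_l. specialize (HM L ltac:(unfold L; lra)).
    apply Rabs_def2 in HM. lra. }
  assert (EgL : ex_RInt g L 1) by (apply (proj1 Gi); lra).
  destruct (ex_RInt_ub g L 1 EgL) as [B HB].
  set (B' := Rabs B + 1).
  assert (HB' : 0 < B') by (unfold B'; pose proof (Rabs_pos B); lra).
  set (e := 1 - Rmin (eps / (8 * B')) ((1 - L)/2)).
  assert (Hmin1 : Rmin (eps / (8 * B')) ((1 - L)/2) <= eps / (8 * B')) by apply Rmin_l.
  assert (Hmin2 : Rmin (eps / (8 * B')) ((1 - L)/2) <= (1 - L)/2) by apply Rmin_r.
  assert (Hmin3 : 0 < Rmin (eps / (8 * B')) ((1 - L)/2)).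
  { apply Rmin_pos. apply Rdiv_lt_0_compat; lra. lra. }
  assert (He1 : L < e < 1) by (unfold e; lra).
  assert (Ege : ex_RInt g e 1) by (apply (proj1 Gi); lra).
  assert (Hge : RInt g e 1 <= eps/8).
  { eapply Rle_trans. apply Rle_abs. eapply Rle_trans. apply abs_RInt_le_const with (M := B').
    lra. auto. intros t Ht. unfold B'. pose proof (Rle_abs B).
    assert (norm (g t) <= B). apply HB. rewrite Rmin_left, Rmax_right; lra.
    change (Rabs (g t) <= B) in H0. lra.
    replace (1 - e) with (Rmin (eps / (8 * B')) ((1 - L)/2)) by (unfold e; ring).
    apply Rle_trans with (eps / (8 * B') * B'). apply Rmult_le_compat_r; lra.
    right. field. lra. }
  assert (HG : is_derive (fun x => RInt (fun t => f x t) L e) x0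
                  (RInt (fun t => Derive (fun u => f u t) x0) L e)).
  { apply is_derive_RInt_param.
    - exists (mkposreal d Hd). intros y Hy t Ht. exists (f' y t). apply is_derive_Reals.
      apply Hder. exact Hy. rewrite Rmax_right in Ht; lra.
    - intros t Ht. rewrite Rmin_left, Rmax_right in Ht by lra.
      intros eps'. destruct (Hc t ltac:(lra) eps' (cond_pos eps')) as [del [Hdel H]].
      assert (Hdel' : 0 < Rmin del (Rmin d (1 - e))).
      { apply Rmin_pos; auto. apply Rmin_pos; lra. }
      exists (mkposreal _ Hdel'). intros u v Hu Hv. simpl in Hu, Hv.
      assert (Rmin del (Rmin d (1 - e)) <= del) by apply Rmin_l.
      assert (Rmin del (Rmin d (1 - e)) <= Rmin d (1 - e)) by apply Rmin_r.
      assert (Rmin d (1 - e) <= d) by apply Rmin_l.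
      assert (Rmin d (1 - e) <= 1 - e) by apply Rmin_r.
      assert (Hv1 : v < 1) by (apply Rabs_def2 in Hv; lra).
      replace (Derive (fun z : R => f z v) u) with (f' u v).
      2: symmetry; apply is_derive_unique; apply is_derive_Reals; apply Hder; lra.
      replace (Derive (fun z : R => f z t) x0) with (f' x0 t).
      2: symmetry; apply is_derive_unique; apply is_derive_Reals; apply Hder; lra.
      apply H; lra.
    - exists (mkposreal d Hd). intros y Hy.
      apply (ex_RInt_Chasles_1 (f y) L e 1). lra. apply (proj1 (HF y Hy)). lra. }
  apply is_derive_Reals in HG.
  rewrite (RInt_ext _ (f' x0)) in HG.
  2:{ intros t Ht. rewrite Rmin_left, Rmax_right in Ht by lra.
      apply is_derive_unique, is_derive_Reals. apply Hder; lra. }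
  destruct (HG (eps/8)) as [del1 Hdel1]; [lra|].
  assert (Hdel : 0 < Rmin del1 d) by (apply Rmin_pos; auto; apply cond_pos).
  exists (mkposreal _ Hdel). intros h Hh0 Hh. simpl in Hh.
  assert (Rmin del1 d <= del1) by apply Rmin_l.
  assert (Rmin del1 d <= d) by apply Rmin_r.
  specialize (Hdel1 h Hh0 ltac:(lra)).
  set (x1 := x0 + h).
  assert (Hx1 : Rabs (x1 - x0) < d) by (unfold x1; replace (x0 + h - x0) with h by ring; lra).
  set (q := fun v => / h * f x1 v + (- / h) * f x0 v).
  assert (Iq : ImpC q (/ h * F x1 + (- / h) * F x0)) by (apply impC_lin; apply HF; auto).
  assert (Bq : forall v, v < 1 -> Rabs (q v) <= g v).
  { intros v Hv. destruct (MVT_abs (fun s => f s v) (fun s => f' s v) x0 x1) as [c [Hc1 Hc2]].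
    { intros c Hc'. apply Hder; auto. eapply Rle_lt_trans. apply between_abs; eauto. auto. }
    assert (Hcd : Rabs (c - x0) < d) by (eapply Rle_lt_trans; [apply between_abs; eauto| auto]).
    unfold q. replace (/ h * f x1 v + - / h * f x0 v) with ((f x1 v - f x0 v) * / h) by ring.
    rewrite Rabs_mult, Hc1, Rabs_inv. unfold x1. replace (x0 + h - x0) with h by ring.
    rewrite Rmult_assoc, Rinv_r. rewrite Rmult_1_r. apply Hb; auto.
    apply Rabs_no_R0; auto. }
  pose proof (dom_bound q g _ Ig Gi Iq Bq L ltac:(lra)) as Dq.
  pose proof (dom_bound (f' x0) g D Ig Gi HD Bf' L ltac:(lra)) as Dd.
  assert (E1 : ex_RInt (f x1) L 1) by (apply (proj1 (HF x1 Hx1)); lra).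
  assert (E0 : ex_RInt (f x0) L 1) by (apply (proj1 (HF x0 H00)); lra).
  assert (E1a : ex_RInt (f x1) L e) by (apply (@ex_RInt_Chasles_1 R_CompleteNormedModule _ L e 1); auto; lra).
  assert (E0a : ex_RInt (f x0) L e) by (apply (@ex_RInt_Chasles_1 R_CompleteNormedModule _ L e 1); auto; lra).
  assert (Eq1 : ex_RInt q L 1) by (apply (proj1 Iq); lra).
  assert (Eqa : ex_RInt q L e) by (apply (@ex_RInt_Chasles_1 R_CompleteNormedModule _ L e 1); auto; lra).
  assert (Eqb : ex_RInt q e 1) by (apply (@ex_RInt_Chasles_2 R_CompleteNormedModule _ L e 1); auto; lra).
  assert (Sq : RInt q L 1 = RInt q L e + RInt q e 1) by (apply RInt_split; auto).
  assert (Sq2 : RInt q L e = / h * RInt (f x1) L e + - / h * RInt (f x0) L e).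
  { unfold q. rewrite RInt_add by (apply ex_RInt_mulc; auto). rewrite !RInt_mulc by auto. reflexivity. }
  assert (Sd : RInt (f' x0) L 1 = RInt (f' x0) L e + RInt (f' x0) e 1)
    by (apply RInt_split; apply Ef'; lra).
  assert (Bqe : Rabs (RInt q e 1) <= RInt g e 1).
  { eapply Rle_trans. apply abs_RInt_le; auto; lra.
    apply RInt_le; auto. lra. apply (ex_RInt_norm q); auto.
    intros x Hx. apply Bq; lra. }
  assert (Bde : Rabs (RInt (f' x0) e 1) <= RInt g e 1).
  { eapply Rle_trans. apply abs_RInt_le. lra. apply Ef'; lra.
    apply RInt_le; auto. lra. apply (ex_RInt_norm (f' x0)); auto. apply Ef'; lra.
    intros x Hx. apply Bf'; lra. }
  assert (Hq : (F (x0 + h) - F x0) / h = / h * F x1 + - / h * F x0) by (unfold x1, Rdiv; ring).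
  assert (HGq : (RInt (fun t => f (x0 + h) t) L e - RInt (fun t => f x0 t) L e) / h
                = RInt q L e).
  { transitivity ((RInt (f x1) L e - RInt (f x0) L e) / h). reflexivity.
    rewrite Sq2. unfold Rdiv. ring. }
  rewrite HGq in Hdel1. replace ((F x1 - F x0) / h) with (/ h * F x1 + - / h * F x0) by (unfold Rdiv; ring).
  apply abs_le_split in Dq. apply abs_le_split in Dd. apply abs_le_split in Bqe.
  apply abs_le_split in Bde. apply Rabs_def2 in Hdel1.
  rewrite Sq in Dq. rewrite Sd in Dd.
  apply Rabs_def1; lra.
Qed.

Lemma flux (s phi phiv phivv phiJv : R -> R) (mu k : R) :
  (forall v, v <= 1 -> forall eps, 0 < eps -> exists del, 0 < del /\
     forall w, w <= 1 -> Rabs (w - v) < del -> Rabs (s w - s v) < eps) ->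
  (forall v, v < 1 -> derivable_pt_lim (fun w => (mu - w) * phi w) v (phiJv v)) ->
  (forall v, v < 1 -> derivable_pt_lim phiv v (phivv v)) ->
  (forall v, v < 1 -> s v + phiJv v - k * phivv v = 0) ->
  lim_left phi 1 0 -> lim_left phiv 1 (phiv 1) ->
  lim_minf (fun v => (v - mu) * phi v + k * phiv v) 0 ->
  ImpC s (k * phiv 1).
Proof.
  intros Hs HJ Hvv Hpde Hl0 Hl1 Hmf.
  set (st := fun w => s (Rmin w 1)).
  assert (Cst : forall z, continuous st z) by (apply cont_clip; auto).
  assert (Es : forall c c', c <= c' <= 1 -> ex_RInt s c c').
  { intros c c' Hcc. apply (ex_RInt_ext st).
    intros x Hx. unfold st. rewrite Rmin_left; auto. rewrite Rmax_right in Hx; lra.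
    apply (@ex_RInt_continuous R_CompleteNormedModule). intros; apply Cst. }
  set (E := fun w => (mu - w) * phi w - k * phiv w).
  assert (HE : forall L e, L <= e < 1 -> RInt s L e = E L - E e).
  { intros L e HLe.
    assert (Hd : forall x, Rmin L e <= x <= Rmax L e -> is_derive (fun w => - E w) x (st x)).
    { intros x Hx. rewrite Rmin_left, Rmax_right in Hx by lra.
      apply is_derive_Reals.
      apply (derivable_pt_lim_ext (fun w => k * phiv w - (mu - w) * phi w)).
      { intros z. unfold E. ring. }
      unfold st. rewrite Rmin_left by lra.
      replace (s x) with (k * phivv x - phiJv x) by (pose proof (Hpde x ltac:(lra)); lra).
      apply (derivable_pt_lim_minus (fun w => k * phiv w) (fun w => (mu - w) * phi w)).
      apply (derivable_pt_lim_scal phiv k). apply Hvv; lra. apply HJ; lra. }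
    pose proof (is_RInt_derive (fun w => - E w) st L e Hd (fun x _ => Cst x)) as H.
    apply is_RInt_unique in H. rewrite <- (RInt_ext st).
    rewrite H. change (- E e - - E L = E L - E e). ring.
    intros x Hx. unfold st. rewrite Rmin_left; auto. rewrite Rmax_right in Hx; lra. }
  assert (ElimL : lim_left E 1 (- k * phiv 1)).
  { intros eps He.
    set (K := Rabs mu + 2). set (K2 := Rabs k + 1).
    assert (HK : 0 < K) by (unfold K; pose proof (Rabs_pos mu); lra).
    assert (HK2 : 0 < K2) by (unfold K2; pose proof (Rabs_pos k); lra).
    destruct (Hl0 (eps / (2 * K))) as [d1 [Hd1 H1]]. apply Rdiv_lt_0_compat; lra.
    destruct (Hl1 (eps / (2 * K2))) as [d2 [Hd2 H2]]. apply Rdiv_lt_0_compat; lra.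
    exists (Rmin 1 (Rmin d1 d2)). split. apply Rmin_pos; [lra|apply Rmin_pos; auto].
    intros y Hy.
    assert (Rmin 1 (Rmin d1 d2) <= 1) by apply Rmin_l.
    assert (Rmin 1 (Rmin d1 d2) <= Rmin d1 d2) by apply Rmin_r.
    assert (Rmin d1 d2 <= d1) by apply Rmin_l. assert (Rmin d1 d2 <= d2) by apply Rmin_r.
    specialize (H1 y ltac:(lra)). specialize (H2 y ltac:(lra)).
    rewrite Rminus_0_r in H1.
    unfold E. replace ((mu - y) * phi y - k * phiv y - - k * phiv 1)
      with ((mu - y) * phi y - k * (phiv y - phiv 1)) by ring.
    eapply Rle_lt_trans. apply Rabs_triang. rewrite Rabs_Ropp, !Rabs_mult.
    assert (Rabs (mu - y) <= K).
    { unfold K. eapply Rle_trans. apply Rabs_triang. rewrite Rabs_Ropp.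
      assert (Rabs y <= 1) by (unfold Rabs; destruct Rcase_abs; lra). lra. }
    assert (HkK : Rabs k <= K2) by (unfold K2; lra).
    assert (H8 : Rabs k * Rabs (phiv y - phiv 1) <= K2 * (eps / (2 * K2))).
    { apply Rmult_le_compat; try apply Rabs_pos; lra. }
    replace (K2 * (eps / (2 * K2))) with (eps/2) in H8 by (field; lra).
    assert (Rabs (mu - y) * Rabs (phi y) < eps / 2).
    { apply Rle_lt_trans with (K * Rabs (phi y)).
      apply Rmult_le_compat_r; [apply Rabs_pos|lra].
      apply Rlt_le_trans with (K * (eps / (2 * K))).
      apply Rmult_lt_compat_l; lra. right; field; lra. }
    lra. }
  assert (HInt : forall L, L < 1 -> RInt s L 1 = E L - (- k * phiv 1)).
  { intros L HL. assert (RInt s L 1 - (E L - - k * phiv 1) = 0); [|lra].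
    apply small_zero. intros eps He.
    destruct (ex_RInt_ub s L 1 (Es L 1 ltac:(lra))) as [B HB].
    set (B' := Rabs B + 1).
    assert (HB' : 0 < B') by (unfold B'; pose proof (Rabs_pos B); lra).
    destruct (ElimL (eps/2) ltac:(lra)) as [d1 [Hd1 H1]].
    set (m := Rmin (Rmin (d1/2) ((1 - L)/2)) (eps / (2 * B'))).
    assert (m <= Rmin (d1/2) ((1 - L)/2)) by apply Rmin_l.
    assert (m <= eps / (2 * B')) by apply Rmin_r.
    assert (Rmin (d1/2) ((1 - L)/2) <= d1/2) by apply Rmin_l.
    assert (Rmin (d1/2) ((1 - L)/2) <= (1-L)/2) by apply Rmin_r.
    assert (Hm : 0 < m).
    { apply Rmin_pos. apply Rmin_pos; lra. apply Rdiv_lt_0_compat; lra. }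
    set (e := 1 - m).
    rewrite (RInt_split s L e 1) by (apply Es; unfold e; lra).
    rewrite (HE L e) by (unfold e; lra).
    specialize (H1 e ltac:(unfold e; lra)).
    assert (Rabs (RInt s e 1) <= eps / 2).
    { eapply Rle_trans. apply abs_RInt_le_const with (M := B').
      unfold e; lra. apply Es; unfold e; lra.
      intros t Ht. assert (norm (s t) <= B). apply HB.
      rewrite Rmin_left, Rmax_right; unfold e in Ht; lra.
      change (Rabs (s t) <= B) in H4. unfold B'. pose proof (Rle_abs B). lra.
      replace (1 - e) with m by (unfold e; ring).
      apply Rle_trans with (eps / (2 * B') * B'). apply Rmult_le_compat_r; lra.
      right; field; lra. }
    apply abs_le_split in H4. apply Rabs_def2 in H1.
    apply Rabs_def1; lra. }
  split.
  - intros c Hc. apply Es. lra.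
  - intros eps He. destruct (Hmf eps He) as [M HM]. exists (Rmin M 1). intros L HL.
    assert (Rmin M 1 <= M) by apply Rmin_l. assert (Rmin M 1 <= 1) by apply Rmin_r.
    rewrite HInt by lra. specialize (HM L ltac:(lra)). rewrite Rminus_0_r in HM.
    unfold E. replace ((mu - L) * phi L - k * phiv L - - k * phiv 1 - k * phiv 1)
      with (- ((L - mu) * phi L + k * phiv L)) by ring.
    rewrite Rabs_Ropp. exact HM.
Qed.

Lemma lim_left_scale (f f2 : R -> R) x l l2 K :
  lim_left f x l -> (forall y, f2 y = f y * K) -> l2 = l * K -> lim_left f2 x l2.
Proof. intros H Hf Hl eps He.
  set (K1 := Rabs K + 1). assert (0 < K1) by (unfold K1; pose proof (Rabs_pos K); lra).
  destruct (H (eps / K1)) as [d [Hd H1]]. apply Rdiv_lt_0_compat; lra.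
  exists d. split; auto. intros y Hy. rewrite Hf, Hl.
  replace (f y * K - l * K) with ((f y - l) * K) by ring. rewrite Rabs_mult.
  specialize (H1 y Hy).
  apply Rle_lt_trans with (eps / K1 * Rabs K).
  apply Rmult_le_compat_r. apply Rabs_pos. lra.
  apply Rle_lt_trans with (eps / K1 * (K1 - 1)). apply Rmult_le_compat_l.
  apply Rlt_le, Rdiv_lt_0_compat; lra. unfold K1; lra.
  replace (eps / K1 * (K1 - 1)) with (eps - eps / K1) by (field; lra).
  assert (0 < eps / K1) by (apply Rdiv_lt_0_compat; lra). lra.
Qed.

Lemma lim_minf_scale (f f2 : R -> R) K :
  lim_minf f 0 -> (forall y, f2 y = f y * K) -> lim_minf f2 0.
Proof. intros H Hf eps He.
  set (K1 := Rabs K + 1). assert (0 < K1) by (unfold K1; pose proof (Rabs_pos K); lra).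
  destruct (H (eps / K1)) as [M H1]. apply Rdiv_lt_0_compat; lra.
  exists M. intros y Hy. rewrite Hf. specialize (H1 y Hy). rewrite Rminus_0_r in *.
  rewrite Rabs_mult.
  apply Rle_lt_trans with (eps / K1 * Rabs K).
  apply Rmult_le_compat_r. apply Rabs_pos. lra.
  apply Rle_lt_trans with (eps / K1 * (K1 - 1)). apply Rmult_le_compat_l.
  apply Rlt_le, Rdiv_lt_0_compat; lra. unfold K1; lra.
  replace (eps / K1 * (K1 - 1)) with (eps - eps / K1) by (field; lra).
  assert (0 < eps / K1) by (apply Rdiv_lt_0_compat; lra). lra.
Qed.

Lemma dpl_scale (f : R -> R) x l A B :
  derivable_pt_lim f x l -> derivable_pt_lim (fun w => f w / A * B) x (l / A * B).
Proof. intros H.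
  apply (derivable_pt_lim_ext (fun w => (B / A) * f w)). intros; unfold Rdiv; ring.
  replace (l / A * B) with ((B / A) * l) by (unfold Rdiv; ring).
  apply (derivable_pt_lim_scal f (B / A)). exact H.
Qed.

Lemma cont3 X Z eps : 0 < eps -> exists eta, 0 < eta /\ forall x y z,
  Rabs (x - X) < eta -> Rabs (y - 1) < eta -> Rabs (z - Z) < eta ->
  Rabs (x * (z / y) - X * Z) < eps.
Proof. intros He.
  set (B := Rabs X + Rabs Z + 1).
  assert (HB : 1 <= B) by (unfold B; pose proof (Rabs_pos X); pose proof (Rabs_pos Z); lra).
  set (C := 2 * (2 * B + B * B) + 1).
  assert (HC : 0 < C) by (unfold C; nra).
  exists (Rmin (1/2) (eps / C)). split.
  apply Rmin_pos; [lra| apply Rdiv_lt_0_compat; lra].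
  intros x y z Hx Hy Hz.
  assert (Rmin (1/2) (eps / C) <= 1/2) by apply Rmin_l.
  assert (Rmin (1/2) (eps / C) <= eps / C) by apply Rmin_r.
  set (et := Rmin (1/2) (eps / C)) in *.
  assert (Het : 0 < et) by (pose proof (Rabs_pos (x - X)); lra).
  apply Rabs_def2 in Hy.
  assert (Hxb : Rabs x <= B).
  { replace x with (X + (x - X)) by ring. eapply Rle_trans. apply Rabs_triang.
    unfold B. pose proof (Rabs_pos Z). lra. }
  assert (HZB : Rabs Z <= B) by (unfold B; pose proof (Rabs_pos X); lra).
  assert (HXB : Rabs X <= B) by (unfold B; pose proof (Rabs_pos Z); lra).
  assert (Hy0 : 1/2 < y) by lra.
  replace (x * (z / y) - X * Z) with ((x * (z - Z) + Z * (x - X) + X * Z * (1 - y)) / y)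
    by (field; lra).
  unfold Rdiv. rewrite Rabs_mult, Rabs_inv. rewrite (Rabs_right y) by lra.
  assert (Hn : Rabs (x * (z - Z) + Z * (x - X) + X * Z * (1 - y)) <= (2 * B + B * B) * et).
  { eapply Rle_trans. apply Rabs_triang. eapply Rle_trans. apply Rplus_le_compat_r. apply Rabs_triang.
    rewrite !Rabs_mult.
    assert (Rabs x * Rabs (z - Z) <= B * et) by (apply Rmult_le_compat; try apply Rabs_pos; lra).
    assert (Rabs Z * Rabs (x - X) <= B * et) by (apply Rmult_le_compat; try apply Rabs_pos; lra).
    assert (Rabs X * Rabs Z <= B * B) by (apply Rmult_le_compat; try apply Rabs_pos; lra).
    assert (Rabs (1 - y) <= et) by (unfold Rabs; destruct Rcase_abs; lra).
    assert (Rabs X * Rabs Z * Rabs (1 - y) <= B * B * et).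
    { apply Rmult_le_compat; try apply Rabs_pos; try lra.
      apply Rmult_le_pos; apply Rabs_pos. }
    lra. }
  apply Rle_lt_trans with ((2 * B + B * B) * et * 2).
  { apply Rmult_le_compat. apply Rabs_pos. apply Rlt_le, Rinv_0_lt_compat; lra. exact Hn.
    replace 2 with (/ (1/2)) by field. apply Rinv_le_contravar; lra. }
  apply Rle_lt_trans with ((C - 1) * (eps / C)).
  { replace ((2 * B + B * B) * et * 2) with ((C - 1) * et) by (unfold C; ring).
    apply Rmult_le_compat_l; [unfold C; nra | lra]. }
  replace ((C - 1) * (eps / C)) with (eps - eps / C) by (field; lra).
  assert (0 < eps / C) by (apply Rdiv_lt_0_compat; lra). lra.
Qed.

Lemma reset_part (phi : R -> R -> R -> R) (P n : R -> R -> R) (vr : R) :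
  (forall t a, 0 < t -> 0 < a -> ImpC (phi t a) (P t a)) ->
  reset_delta phi vr (fun _ => 1) ->
  (forall t, 0 < t -> lim_right (fun a => n t a) 0 (n t 0)) ->
  reset_delta (fun t a v => phi t a v / P t a * n t a) vr (fun t => n t 0).
Proof.
  intros HPC Hreset Hn t Ht g Hg eps He.
  destruct (cont3 (g vr) (n t 0) eps He) as [eta [Heta H3]].
  destruct (Hreset t Ht g Hg eta Heta) as [d1 [Hd1 H1]].
  assert (T1 : test_fn (fun _ => 1)).
  { split. apply continuity_const. intros x y; reflexivity.
    exists 1. intros; rewrite Rabs_R1; lra. }
  destruct (Hreset t Ht _ T1 eta Heta) as [d2 [Hd2 H2]].
  destruct (Hn t Ht eta Heta) as [d3 [Hd3 H3']].
  exists (Rmin d1 (Rmin d2 d3)). split.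
  apply Rmin_pos; auto; apply Rmin_pos; auto.
  intros a Ha.
  assert (Rmin d1 (Rmin d2 d3) <= d1) by apply Rmin_l.
  assert (Rmin d1 (Rmin d2 d3) <= Rmin d2 d3) by apply Rmin_r.
  assert (Rmin d2 d3 <= d2) by apply Rmin_l. assert (Rmin d2 d3 <= d3) by apply Rmin_r.
  destruct (H1 a ltac:(lra)) as [I [HI HIb]].
  destruct (H2 a ltac:(lra)) as [J [HJ HJb]].
  apply imp_iff in HI. apply imp_iff in HJ.
  assert (HJP : J = P t a).
  { apply (impC_unique (phi t a)); [|apply HPC; lra].
    apply (impC_ext (fun v => phi t a v * 1)); auto. intros; ring. }
  exists (I * (n t a / P t a)). split.
  - apply imp_iff.
    apply (impC_ext (fun v => (n t a / P t a) * (phi t a v * g v) + 0 * (phi t a v * g v))).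
    intros; unfold Rdiv; ring.
    replace (I * (n t a / P t a)) with ((n t a / P t a) * I + 0 * I) by ring.
    apply impC_lin; auto.
  - simpl. apply H3.
    rewrite Rmult_1_r in HIb. exact HIb.
    rewrite Rmult_1_r, <- HJP in *. exact HJb.
    apply H3'. lra.
Qed.

Theorem theorem4
  (sigma vr : R) (mu : R -> R)
  (Hsigma : 0 < sigma) (Hvr : vr < 1)
  (phi phit phia phiv phivv phiJv : R -> R -> R -> R)
  (Hphi : NFPT sigma vr mu phi phit phia phiv phivv phiJv)
  (Hreg : NFPT_regular phit phia)
  (P : R -> R -> R)
  (HP : forall t a, 0 < t -> 0 < a ->
          RInt_minf_is (fun v => phi t a v) 1 (P t a) /\ 0 < P t a)
  (n nt na : R -> R -> R)
  (Hn_der : forall t a, 0 < t -> 0 < a ->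
     derivable_pt_lim (fun s => n s a) t (nt t a) /\
     derivable_pt_lim (fun b => n t b) a (na t a))
  (Hn_eq : forall t a, 0 < t -> 0 < a ->
     nt t a + na t a + hazard sigma phiv P t a * n t a = 0)
  (Hn_bc : forall t, 0 < t ->
     RInt_0pinf_is (fun a => hazard sigma phiv P t a * n t a) (n t 0))
  (Hn_cont : forall t, 0 < t -> lim_right (fun a => n t a) 0 (n t 0)) :
  let pi := fun t a v => phi t a v / P t a * n t a in
  exists (pit pia piv pivv piJv : R -> R -> R -> R) (r : R -> R),
    FP_classical sigma mu pi pit pia piv pivv piJv /\
    reset_delta pi vr r /\
    (forall t, 0 < t ->
       RInt_0pinf_is (fun a => hazard sigma phiv P t a * n t a) (r t) /\
       RInt_0pinf_is (fun a => - (sigma ^ 2 / 2) * piv t a 1) (r t)).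
Proof.
  intros pi.
  destruct Hphi as [HFP [Hreset _]].
  destruct HFP as [Hd [Hlim [Hpde [Hbc Hnf]]]].
  destruct Hreg as [Ct [Ca Hdom]].
  assert (HPC : forall t a, 0 < t -> 0 < a -> ImpC (phi t a) (P t a)).
  { intros t a Ht Ha. apply imp_iff. apply HP; auto. }
  set (k := sigma ^ 2 / 2).
  assert (DA : forall t a, 0 < t -> 0 < a -> exists Dt Da,
     derivable_pt_lim (fun s => P s a) t Dt /\ derivable_pt_lim (fun b => P t b) a Da /\
     Dt + Da = k * phiv t a 1).
  { intros t a Ht Ha.
    destruct (Hdom t a Ht Ha) as [d0 [g [Hd0 [[Ig HIg] Hbd]]]]. apply imp_iff in HIg.
    assert (Hdt : 0 < Rmin d0 t) by (apply Rmin_pos; auto).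
    assert (Hda : 0 < Rmin d0 a) by (apply Rmin_pos; auto).
    assert (Rmin d0 t <= d0) by apply Rmin_l. assert (Rmin d0 t <= t) by apply Rmin_r.
    assert (Rmin d0 a <= d0) by apply Rmin_l. assert (Rmin d0 a <= a) by apply Rmin_r.
    assert (Haa : Rabs (a - a) = 0) by (rewrite Rminus_eq_0; apply Rabs_R0).
    assert (Htt : Rabs (t - t) = 0) by (rewrite Rminus_eq_0; apply Rabs_R0).
    destruct (diff_param (fun s v => phi s a v) (fun s v => phit s a v) (fun s => P s a) g Ig t
      (Rmin d0 t) Hdt HIg) as [Dt [HDt1 HDt2]].
    { intros x Hx. apply Rabs_def2 in Hx. apply HPC; lra. }
    { intros x v Hx Hv. apply Rabs_def2 in Hx. apply (Hd x a v); lra. }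
    { intros x v Hx Hv. pose proof Hx as Hx'. apply Rabs_def2 in Hx.
      apply (Hbd x a v); try lra. }
    { intros v Hv eps He. destruct (Ct t a v Ht Ha Hv eps He) as [del [Hdel Hc0]].
      exists (Rmin del t). split. apply Rmin_pos; auto.
      intros x w Hx Hw Hw1. assert (Rmin del t <= del) by apply Rmin_l.
      assert (Rmin del t <= t) by apply Rmin_r. pose proof Hx as Hx'. apply Rabs_def2 in Hx.
      apply Hc0; try lra. }
    destruct (diff_param (fun b v => phi t b v) (fun b v => phia t b v) (fun b => P t b) g Ig a
      (Rmin d0 a) Hda HIg) as [Da [HDa1 HDa2]].
    { intros x Hx. apply Rabs_def2 in Hx. apply HPC; lra. }
    { intros x v Hx Hv. apply Rabs_def2 in Hx. apply (Hd t x v); lra. }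
    { intros x v Hx Hv. pose proof Hx as Hx'. apply Rabs_def2 in Hx.
      apply (Hbd t x v); try lra. }
    { intros v Hv eps He. destruct (Ca t a v Ht Ha Hv eps He) as [del [Hdel Hc0]].
      exists (Rmin del a). split. apply Rmin_pos; auto.
      intros x w Hx Hw Hw1. assert (Rmin del a <= del) by apply Rmin_l.
      assert (Rmin del a <= a) by apply Rmin_r. pose proof Hx as Hx'. apply Rabs_def2 in Hx.
      apply Hc0; try lra. }
    exists Dt, Da. split; [exact HDt2|]. split; [exact HDa2|].
    assert (Hfl : ImpC (fun v => phit t a v + phia t a v) (k * phiv t a 1)).
    { apply (flux _ (phi t a) (phiv t a) (phivv t a) (phiJv t a) (mu t) k).
      - intros v Hv eps He.
        destruct (Ct t a v Ht Ha Hv (eps/2) ltac:(lra)) as [d1 [Hd1 K1]].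
        destruct (Ca t a v Ht Ha Hv (eps/2) ltac:(lra)) as [d2 [Hd2 K2]].
        exists (Rmin d1 d2). split. apply Rmin_pos; auto.
        intros w Hw Hwv. assert (Rmin d1 d2 <= d1) by apply Rmin_l.
        assert (Rmin d1 d2 <= d2) by apply Rmin_r.
        specialize (K1 t a w Ht Ha Hw ltac:(lra) ltac:(lra) ltac:(lra)).
        specialize (K2 t a w Ht Ha Hw ltac:(lra) ltac:(lra) ltac:(lra)).
        replace (phit t a w + phia t a w - (phit t a v + phia t a v)) with
          ((phit t a w - phit t a v) + (phia t a w - phia t a v)) by ring.
        eapply Rle_lt_trans. apply Rabs_triang. lra.
      - intros v Hv. apply (Hd t a v Ht Ha Hv).
      - intros v Hv. apply (Hd t a v Ht Ha Hv).
      - intros v Hv. pose proof (Hpde t a v Ht Ha Hv). unfold k. lra.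
      - destruct (Hlim t a Ht Ha) as [K1 _]. rewrite (Hbc t a Ht Ha) in K1. exact K1.
      - apply (Hlim t a Ht Ha).
      - apply (Hnf t a Ht Ha). }
    pose proof (impC_lin _ _ _ _ 1 1 HDt1 HDa1) as Hs.
    apply (impC_ext _ (fun v => phit t a v + phia t a v)) in Hs; [|intros; ring].
    pose proof (impC_unique _ _ _ Hs Hfl). lra. }
  set (Pt := fun t a => Derive (fun s => P s a) t).
  set (Pa := fun t a => Derive (fun b => P t b) a).
  exists (fun t a v => phit t a v / P t a * n t a +
            phi t a v * ((nt t a * P t a - n t a * Pt t a) / (P t a * P t a))).
  exists (fun t a v => phia t a v / P t a * n t a +
            phi t a v * ((na t a * P t a - n t a * Pa t a) / (P t a * P t a))).
  exists (fun t a v => phiv t a v / P t a * n t a).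
  exists (fun t a v => phivv t a v / P t a * n t a).
  exists (fun t a v => phiJv t a v / P t a * n t a).
  exists (fun t => n t 0).
  split; [|split].
  - split; [|split; [|split; [|split]]].
    + intros t a v Ht Ha Hv.
      destruct (Hd t a v Ht Ha Hv) as [D1 [D2 [D3 [D4 D5]]]].
      destruct (DA t a Ht Ha) as [Dt [Da [HDt [HDa Hsum]]]].
      destruct (Hn_der t a Ht Ha) as [Hnt Hna].
      assert (HP0 : P t a <> 0) by (pose proof (proj2 (HP t a Ht Ha)); lra).
      assert (EPt : Pt t a = Dt) by (unfold Pt; apply is_derive_unique, is_derive_Reals; exact HDt).
      assert (EPa : Pa t a = Da) by (unfold Pa; apply is_derive_unique, is_derive_Reals; exact HDa).
      unfold pi. split; [|split; [|split; [|split]]].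
      * pose proof (derivable_pt_lim_div (fun s => phi s a v) (fun s => P s a) t _ _ D1 HDt HP0) as Hq.
        pose proof (derivable_pt_lim_mult _ (fun s => n s a) t _ _ Hq Hnt) as Hm.
        rewrite EPt.
        replace (phit t a v / P t a * n t a +
            phi t a v * ((nt t a * P t a - n t a * Dt) / (P t a * P t a)))
          with ((phit t a v * P t a - Dt * phi t a v) / (P t a)² * n t a +
                 phi t a v / P t a * nt t a) by (unfold Rsqr; field; auto).
        exact Hm.
      * pose proof (derivable_pt_lim_div (fun b => phi t b v) (fun b => P t b) a _ _ D2 HDa HP0) as Hq.
        pose proof (derivable_pt_lim_mult _ (fun b => n t b) a _ _ Hq Hna) as Hm.
        rewrite EPa.
        replace (phia t a v / P t a * n t a +
            phi t a v * ((na t a * P t a - n t a * Da) / (P t a * P t a)))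
          with ((phia t a v * P t a - Da * phi t a v) / (P t a)² * n t a +
                 phi t a v / P t a * na t a) by (unfold Rsqr; field; auto).
        exact Hm.
      * apply (dpl_scale (fun w => phi t a w)). exact D3.
      * apply (dpl_scale (fun w => phiv t a w)). exact D4.
      * apply (derivable_pt_lim_ext (fun w => ((mu t - w) * phi t a w) / P t a * n t a)).
        intros; unfold Rdiv; ring.
        apply (dpl_scale (fun w => (mu t - w) * phi t a w)). exact D5.
    + intros t a Ht Ha. destruct (Hlim t a Ht Ha) as [L1 L2]. unfold pi. split.
      * apply (lim_left_scale _ _ 1 _ _ (n t a / P t a) L1); intros; unfold Rdiv; ring.
      * apply (lim_left_scale _ _ 1 _ _ (n t a / P t a) L2); intros; unfold Rdiv; ring.
    + intros t a v Ht Ha Hv.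
      destruct (DA t a Ht Ha) as [Dt [Da [HDt [HDa Hsum]]]].
      assert (HP0 : P t a <> 0) by (pose proof (proj2 (HP t a Ht Ha)); lra).
      assert (EPt : Pt t a = Dt) by (unfold Pt; apply is_derive_unique, is_derive_Reals; exact HDt).
      assert (EPa : Pa t a = Da) by (unfold Pa; apply is_derive_unique, is_derive_Reals; exact HDa).
      rewrite EPt, EPa.
      pose proof (Hpde t a v Ht Ha Hv) as X1.
      pose proof (Hn_eq t a Ht Ha) as X2. unfold hazard in X2. fold k in X2, X1.
      fold k.
      transitivity ((phit t a v + phia t a v + phiJv t a v - k * phivv t a v) * (n t a / P t a)
        + phi t a v * (((nt t a + na t a) * P t a - n t a * (Dt + Da)) / (P t a * P t a))).
      { field. auto. }
      rewrite X1, Hsum.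
      replace (nt t a + na t a) with (- (- k * phiv t a 1 / P t a * n t a)) by lra.
      field. auto.
    + intros t a Ht Ha. unfold pi. rewrite (Hbc t a Ht Ha). unfold Rdiv; ring.
    + intros t a Ht Ha. unfold pi.
      apply (lim_minf_scale _ _ (n t a / P t a) (Hnf t a Ht Ha)).
      intros; unfold Rdiv; ring.
  - apply reset_part; auto.
  - intros t Ht. split. apply Hn_bc; auto.
    replace (fun a => - k * (phiv t a 1 / P t a * n t a))
      with (fun a => hazard sigma phiv P t a * n t a).
    apply Hn_bc; auto.
    apply functional_extensionality. intros a. unfold hazard, k, Rdiv. ring.
Qed.
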